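(* Let $G$ be a finite graph with $n\ge1$ vertices, each of degree at least $1$. Take $r=n+1$, $V=\mathbb{C}^{n+1}$, $B=I_{n+1}$, $x_j=e^{2\pi\sqrt{-1}\,j/n}$ for $j=1,\dots,n$, and $t=0$, and let $\mathcal{A}=\{A_1,A_2,\dots\}$ be given by $A_1^i=t$ if $i=n+1$ and $0$ otherwise, and for $d\ge2$: $A_d^{i_1\dots i_d}=x_i$ if $(i_1,\dots,i_d)$ is a permutation of $(i,i,n+1,\dots,n+1)$ with $i\in\{1,\dots,n\}$, $=t$ if $(i_1,\dots,i_d)=(n+1,\dots,n+1)$, and $0$ otherwise. Then the number of Hamiltonian cycles of $G$ equals $\frac1n\,\mathcal{F}_{\mathcal{A},I_{n+1}}(G)$.
   Context: $\mathcal{F}_{\mathcal{A},B}(G)=\sum_{c:H\to\{1,\dots,r\}}\prod_{\{h,h'\}\in E(G)}B_{c(h)c(h')}\prod_{k}A_{d_k}^{c(h_{k,1})\dots c(h_{k,d_k})}$, where $H$ is the set of half-edges of $G$ (two per edge, loops included) and $h_{k,1},\dots,h_{k,d_k}$ are the half-edges at vertex $v_k$ of degree $d_k$; i.e. a copy of $A_{d_k}$ is placed at each vertex and contracted along edges using $B$. A cycle of $G$ is a $2$-valent subgraph (every vertex in it has degree $2$ within it, loops counted twice); a Hamiltonian cycle is a connected cycle with $n=|V(G)|$ edges. *)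

(* Defs.v *)
From mathcomp Require Import all_boot all_algebra.
From mathcomp Require Import all_classical all_reals all_analysis.
From mathcomp Require Import complex.
Set Implicit Arguments. Unset Strict Implicit. Unset Printing Implicit Defensive.
Import GRing.Theory Num.Theory.
Local Open Scope ring_scope.

(* A finite multigraph (loops and parallel edges allowed) on vertex set 'I_n:
   a finite edge type E and, for each edge, its two end vertices.
   Each edge e has two half-edges (e,false) and (e,true); a loop has both
   half-edges at the same vertex. *)

Definition hend (n : nat) (E : finType) (ends : E -> 'I_n * 'I_n)
  (h : E * bool) : 'I_n :=
  if h.2 then (ends h.1).2 else (ends h.1).1.

(* the half-edges at vertex v, listed in a fixed order h_{v,1},...,h_{v,d_v} *)
Definition halfs_at (n : nat) (E : finType) (ends : E -> 'I_n * 'I_n)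
  (v : 'I_n) : seq (E * bool) :=
  [seq h <- enum {: E * bool} | hend ends h == v].

(* degree of v (loops counted twice) *)
Definition deg (n : nat) (E : finType) (ends : E -> 'I_n * 'I_n) (v : 'I_n) : nat :=
  size (halfs_at ends v).

(* The partition function F_{A,B}(G) with r colours:
   sum over colourings c of half-edges of
   prod_{edges} B_{c(h) c(h')} * prod_{vertices v} A_{d_v}^{c(h_{v,1})...c(h_{v,d_v})}.
   A d s is the entry of the tensor A_d at the multi-index s (a seq of length d). *)
Definition partfun (C : comPzRingType) (r n : nat) (E : finType)
  (ends : E -> 'I_n * 'I_n) (B : 'M[C]_r) (A : nat -> seq 'I_r -> C) : C :=
  \sum_(c : {ffun E * bool -> 'I_r})
     (\prod_(e : E) B (c (e, false)) (c (e, true))) *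
     \prod_(v : 'I_n) A (deg ends v) [seq c h | h <- halfs_at ends v].

Definition xroot (R : realType) (n j : nat) : R[i] :=
  let th : R := pi *+ 2 * j%:R / n%:R in (cos th +i* sin th)%C.

(* The tensors A_d of the corollary, with colours 'I_n.+1; the colour ord_max
   plays the role of n+1 and colour i (val i < n) plays the role of i+1.
   A_d is only used for d >= 1 (A_0 set to 0, never used). *)
Definition A_ham (R : realType) (n : nat) (t : R[i]) (d : nat)
  (s : seq 'I_n.+1) : R[i] :=
  if d == 0%N then 0
  else if d == 1%N then (if s == [:: ord_max] then t else 0)
  else match [pick i : 'I_n.+1 | (i != ord_max) &&
                perm_eq s [:: i, i & nseq (d - 2) ord_max]] with
       | Some i => xroot R n (val i).+1
       | None => if s == nseq d ord_max then t else 0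
       end.

Definition deg_in (n : nat) (E : finType) (ends : E -> 'I_n * 'I_n)
  (S : {set E}) (v : 'I_n) : nat :=
  #|[set h : E * bool | (h.1 \in S) && (hend ends h == v)]|.

Definition is_cycle (n : nat) (E : finType) (ends : E -> 'I_n * 'I_n)
  (S : {set E}) : bool :=
  [forall v : 'I_n, (deg_in ends S v == 0%N) || (deg_in ends S v == 2%N)].

Definition adjS (n : nat) (E : finType) (ends : E -> 'I_n * 'I_n)
  (S : {set E}) : rel 'I_n :=
  fun u v => [exists e in S, (ends e == (u, v)) || (ends e == (v, u))].

Definition sub_connected (n : nat) (E : finType) (ends : E -> 'I_n * 'I_n)
  (S : {set E}) : bool :=
  [forall u : 'I_n, forall v : 'I_n,
     ((0 < deg_in ends S u)%N && (0 < deg_in ends S v)%N) ==>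
       connect (adjS ends S) u v].

Definition hamiltonian (n : nat) (E : finType) (ends : E -> 'I_n * 'I_n)
  (S : {set E}) : bool :=
  [&& is_cycle ends S, sub_connected ends S & #|S| == n].

(* Main.v *)
Require Import Defs.
From mathcomp Require Import all_boot all_algebra.
From mathcomp Require Import all_classical all_reals all_analysis.
From mathcomp Require Import complex.
From mathcomp Require Import ring lra zify.
Import GRing.Theory Num.Theory.
Local Open Scope ring_scope.

Section Trig.
Variable R : realType.

Definition cis (x : R) : R[i] := (cos x +i* sin x)%C.

Lemma cmul (a b c d : R) : ((a +i* b) * (c +i* d) = (a*c - b*d) +i* (a*d + b*c))%C.
Proof. by []. Qed.

Lemma cisD x y : cis (x + y) = cis x * cis y.
Proof. rewrite /cis cmul cosD sinD. congr (_ +i* _)%C. by rewrite addrC mulrC [sin x * _]mulrC. Qed.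

Lemma cis0 : cis 0 = 1.
Proof. by rewrite /cis cos0 sin0. Qed.

Lemma cis_nat x j : cis (x * j%:R) = cis x ^+ j.
Proof.
elim: j => [|j IH]; first by rewrite mulr0 cis0 expr0.
rewrite mulrS mulrDr mulr1 cisD IH exprS. by [].
Qed.

Lemma xrootE n j : xroot R n j = xroot R n 1 ^+ j.
Proof.
rewrite /xroot -/(cis _) -/(cis _) -cis_nat; congr cis.
by rewrite mulr1 mulrAC.
Qed.

Lemma xroot_n n : (0 < n)%N -> xroot R n 1 ^+ n = 1.
Proof.
move=> n0; rewrite -xrootE /xroot -/(cis _) mulfK ?pnatr_eq0 -?lt0n //.
by rewrite /cis cos2pi sin2pi.
Qed.

Lemma xroot_neq1 n k : (0 < k)%N -> (k < n)%N -> xroot R n 1 ^+ k != 1.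
Proof.
move=> k0 kn; rewrite -xrootE /xroot -/(cis _).
set th := _ / _.
have n0 : (0 < n%:R :> R) by rewrite ltr0n; apply: leq_trans kn.
have th0 : 0 < th / 2.
  have p2 : 0 < pi *+ 2 :> R by rewrite mulr2n addr_gt0 // pi_gt0.
  rewrite /th divr_gt0 // divr_gt0 // mulr_gt0 // ltr0n.
  exact: k0.
have thpi : th / 2 < pi.
  have -> : th / 2 = pi * (k%:R / n%:R).
    rewrite /th mulr2n; field; rewrite pnatr_eq0 -lt0n; exact: leq_trans (ltn0Sn k) kn.
  rewrite gtr_pMr ?pi_gt0 // ltr_pdivrMr // mul1r ltr_nat //.
have hs : 0 < sin (th / 2) by apply: sin_gt0_pi; rewrite th0 thpi.
apply/negP => /eqP [] hc _.
have : cos ((th / 2) *+ 2) = 1 by rewrite -mulr_natr divfK ?pnatr_eq0.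
rewrite cos_mulr2n cos2sin2 mulr2n => h.
have := exprn_gt0 2 hs. lra.
Qed.

End Trig.

Section Comb.
Variable R : realType.
Variable n : nat.
Hypothesis n0 : (0 < n)%N.

Local Notation mx := (@ord_max n).
Local Notation om := (xroot R n 1).
Local Notation A := (@A_ham R n 0).

Definition okP d (s : seq 'I_n.+1) (i : 'I_n.+1) :=
  (i != mx) && perm_eq s [:: i, i & nseq (d - 2) mx].

Lemma okP_uniq d s i j : okP d s i -> okP d s j -> i = j.
Proof.
move=> /andP [hi p1] /andP [hj p2].
rewrite perm_sym in p1.
have : i \in [:: j, j & nseq (d - 2) mx].
  by rewrite -(perm_mem (perm_trans p1 p2)) !inE eqxx.
rewrite !inE mem_nseq => /orP [/eqP //|/orP [/eqP //|/andP [_ /eqP h]]].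
by rewrite h eqxx in hi.
Qed.

Lemma A_sum d s : A d s =
  if (1 < d)%N then \sum_(i | okP d s i) xroot R n (val i).+1 else 0.
Proof.
rewrite /A_ham; case: d => [|[|d]] //=; first by rewrite if_same.
case: pickP => [i Hi | H].
  by rewrite (big_pred1 i) // => j; apply/idP/eqP => [Hj|->//]; apply: okP_uniq Hj Hi.
by rewrite if_same big_pred0.
Qed.

Definition rot (i : 'I_n.+1) : 'I_n.+1 :=
  if (i.+1 < n)%N then inord i.+1 else if i == mx then mx else inord 0.

Lemma rot_val i : (rot i : nat) = if (i.+1 < n)%N then i.+1 else if i == mx then n else 0%N.
Proof.
rewrite /rot; case: ifP => h; first by rewrite inordK // ltnS ltnW.
by case: ifP => // _; rewrite inordK.
Qed.

Lemma ord_mx (i : 'I_n.+1) : (i == mx) = (nat_of_ord i == n).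
Proof. by []. Qed.

Lemma rot_inj : injective rot.
Proof.
move=> i j h; apply: val_inj; move: (congr1 (@nat_of_ord _) h); rewrite !rot_val !ord_mx /=.
have := ltn_ord i; have := ltn_ord j.
case: (ltnP i.+1 n); case: (ltnP j.+1 n); case: (nat_of_ord i =P n); case: (nat_of_ord j =P n); lia.
Qed.

Lemma rot_mx i : (rot i == mx) = (i == mx).
Proof.
rewrite !ord_mx /= rot_val ord_mx; have := ltn_ord i.
case: (ltnP i.+1 n); case: (nat_of_ord i =P n); lia.
Qed.

Lemma rotmx : rot mx = mx.
Proof. by apply/eqP; rewrite rot_mx. Qed.

Lemma xroot_rot i : i != mx -> xroot R n (val (rot i)).+1 = om * xroot R n (val i).+1.
Proof.
rewrite ord_mx => hi; rewrite /= rot_val ord_mx (negbTE hi) (xrootE _ _ (val i).+1).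
case: ifP => h; first by rewrite xrootE exprS.
have -> : (val i).+1 = n.
  change (val i) with (nat_of_ord i); move/eqP: hi; have := ltn_ord i; lia.
by rewrite xroot_n // mulr1 xrootE expr1.
Qed.

Lemma A_rot d s : A d (map rot s) = om * A d s.
Proof.
rewrite !A_sum; case: ifP => _; last by rewrite mulr0.
rewrite mulr_sumr (reindex_inj rot_inj); apply: eq_big => [i|i /andP [hi _]].
  rewrite /okP rot_mx; congr (_ && _).
  have -> : [:: rot i, rot i & nseq (d - 2) mx] = map rot [:: i, i & nseq (d - 2) mx].
    by rewrite /= map_nseq rotmx.
  apply/idP/idP; first exact: (perm_map_inj rot_inj).
  by move=> hp; apply: perm_map.
by rewrite rot_mx in hi; rewrite xroot_rot.
Qed.


Variable E : finType.
Variable ends : E -> 'I_n * 'I_n.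
Local Notation col := {ffun E * bool -> 'I_n.+1}.

Definition consc (c : col) := [forall e, c (e, false) == c (e, true)].
Definition Sc (c : col) : {set E} := [set e | c (e, false) != mx].
Definition Aprod (c : col) :=
  \prod_(v : 'I_n) A (deg ends v) [seq c h | h <- halfs_at ends v].
Definition Inner (S : {set E}) := \sum_(c | consc c && (Sc c == S)) Aprod c.

Lemma partfunE : partfun ends (1%:M : 'M[R[i]]_n.+1) A = \sum_(S : {set E}) Inner S.
Proof.
have -> : partfun ends (1%:M : 'M[R[i]]_n.+1) A = \sum_(c | consc c) Aprod c.
  rewrite /partfun [RHS]big_mkcond /=; apply: eq_bigr => c _.
  rewrite /consc; case: (boolP [forall e, _]) => [/forallP H | /forallPn [e He]].
    by rewrite big1 ?mul1r // => e _; rewrite mxE (eqP (H e)) eqxx mulr1n.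
  by rewrite (bigD1 e) //= mxE (negbTE He) mulr0n !mul0r.
by rewrite (partition_big Sc predT).
Qed.

Lemma hend_halfs v h : h \in halfs_at ends v -> hend ends h = v.
Proof. by rewrite mem_filter => /andP [/eqP]. Qed.

Lemma in_halfs h : h \in halfs_at ends (hend ends h).
Proof. by rewrite mem_filter eqxx mem_enum. Qed.

Lemma deg_inE S v : deg_in ends S v = count (fun h => h.1 \in S) (halfs_at ends v).
Proof.
rewrite /deg_in /halfs_at cardsE cardE /enum_mem size_filter count_filter.
rewrite -size_filter /= filter_predT size_filter; apply: eq_count => h.
by rewrite !inE.
Qed.

Lemma A_nz d s : A d s != 0 -> exists i, okP d s i.
Proof.
rewrite A_sum; case: ifP => _; last by rewrite eqxx.
case: (pickP (okP d s)) => [i hi|h] H; first by exists i.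
by rewrite big_pred0 ?eqxx in H.
Qed.

Lemma valid c : Aprod c != 0 -> forall v, exists i, okP (deg ends v) [seq c h | h <- halfs_at ends v] i.
Proof. by move=> /prodf_neq0 H v; apply: A_nz; apply: H. Qed.

Lemma inSc c h : consc c -> (h.1 \in Sc c) = (c h != mx).
Proof.
move=> /forallP hc; case: h => e b; rewrite inE /=.
by case: b => //; rewrite (eqP (hc e)).
Qed.

Lemma deg2 c v : consc c -> Aprod c != 0 -> deg_in ends (Sc c) v = 2%N.
Proof.
move=> hc nz; have [i /andP [hi hp]] := valid c nz v.
rewrite deg_inE (eq_count (a2 := fun h => c h != mx)); last by move=> h; rewrite inSc.
rewrite -(count_map c (fun x => x != mx)) (permP hp) /= count_nseq /= eqxx hi.
by rewrite mul0n.
Qed.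

Lemma inner_bad S v : deg_in ends S v != 2%N -> Inner S = 0.
Proof.
move=> hv; apply: big1 => c /andP [hc /eqP hS].
apply/eqP; apply: contraR hv => nz.
by rewrite -hS deg2.
Qed.

Lemma adj_sym (S : {set E}) : symmetric (adjS ends S).
Proof.
move=> x y; rewrite /adjS; apply: eq_existsb => e.
by rewrite orbC.
Qed.

Lemma adj_edge (S : {set E}) e : e \in S -> adjS ends S (ends e).1 (ends e).2.
Proof. by move=> he; apply/existsP; exists e; rewrite he -surjective_pairing eqxx. Qed.

Lemma conn_edge (S : {set E}) u e : e \in S ->
  connect (adjS ends S) u (ends e).1 = connect (adjS ends S) u (ends e).2.
Proof.
move=> he; have h1 := adj_edge S e he; have h2 : adjS ends S (ends e).2 (ends e).1.
  by rewrite adj_sym.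
apply/idP/idP => h.
  exact: connect_trans h (connect1 h1).
exact: connect_trans h (connect1 h2).
Qed.

Definition phi (S : {set E}) u (c : col) : col :=
  [ffun h => if connect (adjS ends S) u (hend ends h) then rot (c h) else c h].

Lemma phi_inj (S : {set E}) u : injective (phi S u).
Proof.
move=> c c' /ffunP H; apply/ffunP => h; have := H h; rewrite !ffunE.
by case: ifP => _ //; apply: rot_inj.
Qed.

Lemma Sc_phi (S : {set E}) u c : Sc (phi S u c) = Sc c.
Proof. by apply/setP => e; rewrite !inE ffunE; case: ifP => // _; rewrite rot_mx. Qed.

Lemma consc_phi (S : {set E}) u c : Sc c = S -> consc (phi S u c) = consc c.
Proof.
move=> hS; apply: eq_forallb => e; rewrite !ffunE /hend /=.
case: (boolP (e \in S)) => he.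
  by rewrite (conn_edge S u e he); case: ifP => _ //; rewrite (inj_eq rot_inj).
have hm : c (e, false) = mx by move: he; rewrite -hS inE negbK => /eqP.
rewrite hm; case: ifP => _; case: ifP => _; rewrite ?rotmx //.
  by rewrite eq_sym rot_mx eq_sym.
by rewrite eq_sym rot_mx eq_sym.
Qed.

Lemma Aprod_phi (S : {set E}) u c :
  Aprod (phi S u c) = om ^+ (\sum_v (connect (adjS ends S) u v : nat)) * Aprod c.
Proof.
rewrite /Aprod -prodrXr -big_split /=; apply: eq_bigr => v _.
have -> : [seq phi S u c h | h <- halfs_at ends v] =
  if connect (adjS ends S) u v then map rot [seq c h | h <- halfs_at ends v]
  else [seq c h | h <- halfs_at ends v].
  case: ifP => hv; rewrite ?(map_comp rot c) -?map_comp; apply/eq_in_map => h hh;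
   by rewrite /phi /= ffunE (hend_halfs v h hh) hv.
by case: ifP => _; rewrite ?A_rot ?expr1 ?expr0 ?mul1r.
Qed.

Lemma inner_disconnected (S : {set E}) u v : ~~ connect (adjS ends S) u v -> Inner S = 0.
Proof.
move=> nc; set k := (\sum_v (connect (adjS ends S) u v : nat))%N.
have hk0 : (0 < k)%N by rewrite /k (bigD1 u) //= connect0.
have hkn : (k < n)%N.
  have e1 : (\sum_(w : 'I_n) 1 = n)%N by rewrite sum1_card card_ord.
  rewrite /k -[X in (_ < X)%N]e1 [X in (_ < X)%N](bigD1 v) //=.
  rewrite [X in (X < _)%N](bigD1 v) //= (negbTE nc) add0n add1n ltnS.
  by apply: leq_sum => w _; case: connect.
have : Inner S = om ^+ k * Inner S.
  rewrite {1}/Inner (reindex_inj (@phi_inj S u)) /= /Inner mulr_sumr.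
  apply: eq_big => c.
    rewrite Sc_phi; case: (Sc c =P S) => hS; last by rewrite !andbF.
    by rewrite consc_phi.
  by move=> _; rewrite Aprod_phi.
move/eqP; rewrite -subr_eq0 -{1}[Inner S]mul1r -mulrBl mulf_eq0 subr_eq0 eq_sym.
by rewrite (negbTE (@xroot_neq1 R n k hk0 hkn)) /= => /eqP.
Qed.

Lemma perm_two (s : seq 'I_n.+1) i : i != mx ->
  all (fun x => (x == i) || (x == mx)) s -> count (pred1 i) s = 2%N ->
  perm_eq s [:: i, i & nseq (size s - 2) mx].
Proof.
move=> hi ha hc.
rewrite -(perm_filterC (pred1 i) s).
have /all_pred1P f1 := filter_all (pred1 i) s.
rewrite size_filter hc in f1.
have f2 : [seq x <- s | predC (pred1 i) x] = nseq (size s - 2) mx.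
  have /all_pred1P -> : all (pred1 mx) [seq x <- s | predC (pred1 i) x].
    rewrite all_filter; apply/allP => x hx; have := allP ha x hx.
    by rewrite /= => /orP [->|->]; rewrite ?implybT.
  by rewrite size_filter -(count_predC (pred1 i) s) hc addKn.
by rewrite f1 f2.
Qed.

Definition cS (S : {set E}) (i : 'I_n.+1) : col :=
  [ffun h : E * bool => if h.1 \in S then i else mx].

Lemma cS_ok (S : {set E}) i : i != mx -> consc (cS S i) && (Sc (cS S i) == S).
Proof.
move=> hi; apply/andP; split.
  by apply/forallP => e; rewrite !ffunE.
apply/eqP/setP => e; rewrite inE ffunE /=.
by case: (e \in S); rewrite ?hi ?eqxx.
Qed.

Lemma Aprod_cS (S : {set E}) i : i != mx -> (forall v, deg_in ends S v = 2%N) ->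
  Aprod (cS S i) = 1.
Proof.
move=> hi hd.
have hv : forall v, A (deg ends v) [seq cS S i h | h <- halfs_at ends v] = xroot R n (val i).+1.
  move=> v.
  have hcnt : count (pred1 i) [seq cS S i h | h <- halfs_at ends v] = 2%N.
    rewrite count_map -(hd v) deg_inE; apply: eq_count => h.
    by rewrite /= ffunE; case: (h.1 \in S); rewrite ?eqxx // eq_sym (negbTE hi).
  have hok : okP (deg ends v) [seq cS S i h | h <- halfs_at ends v] i.
    rewrite /okP hi /deg -(size_map (cS S i)); apply: perm_two => //.
    by apply/allP => x /mapP [h _ ->]; rewrite ffunE; case: (h.1 \in S); rewrite eqxx ?orbT.
  have h1 : (1 < deg ends v)%N.
    by rewrite /deg -(size_map (cS S i)) -hcnt count_size.
  rewrite A_sum h1 (big_pred1 i) // => j.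
  by apply/idP/eqP => [hj | ->] //; apply: okP_uniq hj hok.
rewrite /Aprod (eq_bigr _ (fun v _ => hv v)) prodr_const card_ord.
by rewrite xrootE -exprM mulnC exprM xroot_n // expr1n.
Qed.

Lemma valid_cS (S : {set E}) c : consc c -> Sc c = S -> Aprod c != 0 ->
  (forall u v, connect (adjS ends S) u v) -> exists2 i, i != mx & c = cS S i.
Proof.
move=> hc hS nz hconn.
have [f hf] := fin_all_exists (valid c nz).
have col : forall h, h.1 \in S -> c h = f (hend ends h).
  move=> h hh; have /andP [_ hp] := hf (hend ends h).
  have : c h \in [seq c h | h <- halfs_at ends (hend ends h)] by apply: map_f; apply: in_halfs.
  rewrite (perm_mem hp) !inE mem_nseq => /orP [/eqP //|/orP [/eqP //|/andP [_ /eqP hm]]].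
  by move: hh; rewrite -hS inSc // hm eqxx.
set v0 : 'I_n := Ordinal n0.
have fconst : forall w, f w = f v0.
  move=> w; have hcl : fingraph.closed (adjS ends S) [pred x | f x == f v0].
    move=> x y /existsP [e /andP [he hxy]].
    have fe : f (ends e).1 = f (ends e).2.
      rewrite -(col (e, false)) // -(col (e, true)) //.
      by move/forallP: hc => /(_ e) /eqP.
    by case/orP: hxy => /eqP hx; rewrite hx /= in fe; rewrite !inE fe.
  by have := closed_connect hcl (hconn v0 w); rewrite !inE eqxx => /esym /eqP.
exists (f v0); first by have /andP [] := hf v0.
apply/ffunP => h; rewrite ffunE; case: ifP => hh; first by rewrite col // fconst.
by move: hh; rewrite -hS inSc // => /negbFE /eqP.
Qed.

Lemma inner_ham (S : {set E}) : (forall v, deg_in ends S v = 2%N) ->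
  (forall u v, connect (adjS ends S) u v) -> Inner S = n%:R.
Proof.
move=> hd hconn.
set v0 : 'I_n := Ordinal n0.
have [e0 he0] : exists e0, e0 \in S.
  have : has (fun h : E * bool => h.1 \in S) (halfs_at ends v0).
    by rewrite has_count -deg_inE hd.
  by case/hasP => h _ hh; exists h.1.
set I := [set~ (mx : 'I_n.+1)].
set Img := [set cS S i | i in I].
have cinj : {in I &, injective (cS S)}.
  by move=> i j _ _ /ffunP /(_ (e0, false)); rewrite !ffunE /= he0.
rewrite /Inner (bigID (mem Img)) /= [X in _ + X]big1 ?addr0; last first.
  move=> c /andP [/andP [hc /eqP hS] hn]; apply/eqP; apply: contraR hn => nz.
  have [i hi ->] := valid_cS S c hc hS nz hconn.
  by apply/imsetP; exists i; rewrite // in_setC1.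
rewrite (eq_bigl (mem Img)); last first.
  move=> c; apply/andP/idP => [[_ //]|hc]; split => //.
  by case/imsetP: hc => i; rewrite in_setC1 => hi ->; apply: cS_ok.
rewrite big_imset //= (eq_bigr (fun _ => 1)); last first.
  by move=> i; rewrite in_setC1 => hi; apply: Aprod_cS.
by rewrite sumr_const cardsC1 card_ord.
Qed.

Lemma handshake (S : {set E}) : (\sum_v deg_in ends S v = #|S| * 2)%N.
Proof.
have e1 : forall v, deg_in ends S v = (\sum_(h : E * bool) ((h.1 \in S) && (hend ends h == v) : nat))%N.
  move=> v; rewrite /deg_in -sum1dep_card big_mkcond /=.
  by apply: eq_bigr => h _; case: ifP.
rewrite (eq_bigr _ (fun v _ => e1 v)) exchange_big /=.
have e2 : forall h : E * bool, (\sum_v ((h.1 \in S) && (hend ends h == v) : nat) = (h.1 \in S))%N.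
  move=> h; rewrite (bigD1 (hend ends h)) //= eqxx andbT big1 ?addn0 // => w hw.
  by rewrite eq_sym (negbTE hw) andbF.
rewrite (eq_bigr _ (fun h _ => e2 h)).
rewrite (eq_bigr (fun h : E * bool => if h.1 \in S then 1 else 0)%N); last first.
  by move=> h _; case: (_ \in _).
rewrite -big_mkcond sum1dep_card.
have -> : [set h : E * bool | h.1 \in S] = finset.setX S [set: bool].
  by apply/setP => h; rewrite !inE andbT.
by rewrite cardsX cardsT card_bool.
Qed.

Lemma ham_deg2 (S : {set E}) : hamiltonian ends S -> forall v, deg_in ends S v = 2%N.
Proof.
case/and3P => /forallP hcyc _ /eqP hcard v.
have hs := handshake S; rewrite hcard in hs.
case/orP: (hcyc v) => /eqP hv //.
rewrite (bigD1 v) //= hv add0n in hs.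
have hle : (\sum_(w | w != v) deg_in ends S w <= \sum_(w | w != v) 2)%N.
  by apply: leq_sum => w _; case/orP: (hcyc w) => /eqP ->.
have e1 : (\sum_(w : 'I_n) 2 = n * 2)%N by rewrite sum_nat_const card_ord mulnC.
rewrite (bigD1 v) //= in e1.
have e1' : (2 + \sum_(w | w != v) 2 = n * 2)%N := e1.
move: hle e1'; rewrite hs; lia.
Qed.

Lemma deg2_ham (S : {set E}) : (forall v, deg_in ends S v = 2%N) ->
  sub_connected ends S -> hamiltonian ends S.
Proof.
move=> hd hc; apply/and3P; split => //.
  by apply/forallP => v; rewrite hd.
have := handshake S; rewrite (eq_bigr _ (fun v _ => hd v)) sum_nat_const card_ord => h.
apply/eqP; lia.
Qed.

Lemma inner_val (S : {set E}) : Inner S = if hamiltonian ends S then n%:R else 0.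
Proof.
case: (boolP [forall v, deg_in ends S v == 2%N]) => [/forallP hall | /forallPn [v hv]].
  have hd : forall v, deg_in ends S v = 2%N by move=> v; apply/eqP.
  case: (boolP (sub_connected ends S)) => hc.
    rewrite deg2_ham //; apply: inner_ham => // u w.
    by move/forallP: hc => /(_ u) /forallP /(_ w); rewrite !hd.
  have -> : hamiltonian ends S = false.
    by apply/negbTE; apply: contra hc => /and3P [].
  move/forallPn: hc => [u /forallPn [w]]; rewrite negb_imply => /andP [_ nc].
  exact: inner_disconnected nc.
have -> : hamiltonian ends S = false.
  by apply/negbTE; apply: contra hv => h; rewrite ham_deg2.
exact: inner_bad hv.
Qed.

End Comb.

Theorem corollary3 (R : realType) (n : nat) (E : finType)
  (ends : E -> 'I_n * 'I_n) :
  (1 <= n)%N ->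
  (forall v : 'I_n, (1 <= deg ends v)%N) ->
  (#|[set S : {set E} | hamiltonian ends S]|%:R : R[i]) =
    n%:R^-1 * partfun ends (1%:M : 'M[R[i]]_n.+1) (@A_ham R n 0).
Proof.
move=> n1 _.
rewrite partfunE (eq_bigr _ (fun S _ => @inner_val R n n1 E ends S)).
have -> : \sum_(S : {set E}) (if hamiltonian ends S then n%:R else 0) =
    (#|[set S : {set E} | hamiltonian ends S]| * n)%:R :> R[i].
  rewrite -sum1dep_card big_distrl /= natr_sum big_mkcond /=.
rewrite [RHS]big_mkcond /=.   by apply: eq_bigr => S _; case: ifP; rewrite ?mul1n.
rewrite natrM mulrC mulfK // pnatr_eq0 -lt0n //.
Qed.
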